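(* Consider Algorithm PDFPM (described in the context) applied to $\min_x F(x)$, and let $\bar{x}^k$ be the point computed in Step 2 at some iteration $k$ with current parameter $\sigma_k$. Suppose Assumptions A1, A2 and A3 (described in the context) hold. If $\sigma_k\|\bar{x}^k-x^k\|\ge\epsilon$, then for every $j\in\mathcal{J}$, $$F_j(\bar{x}^k)\le F_j(x^k)-\Big(\frac{\sigma_k-5L_j-\overline{B}}{2}\Big)\|s^k\|^2+\frac{4^{\beta_j}n^{\frac{1-\beta_j}{2}}M_j+M_j}{\beta_j+1}\|s^k\|^{\beta_j+1},$$ where $s^k=\bar{x}^k-x^k$.
   Context: Setting: $m,n\ge1$, $\mathcal{J}=\{1,\dots,m\}$, $F=(F_1,\dots,F_m)$ with $F_j=f_j+h_j$, where $f_j:\mathbb{R}^n\to\mathbb{R}$ is differentiable and $h_j:\mathbb{R}^n\to\mathbb{R}\cup\{+\infty\}$ is convex. For each $j$ a map $g_{f_j}:\mathbb{R}^n\times[0,1]\to\mathbb{R}^n$ is given with $\lim_{\lambda\to0}g_{f_j}(x,\lambda)=\nabla f_j(x)$ (a gradient approximation, e.g. finite differences). $\|\cdot\|$ is the Euclidean norm (spectral norm for matrices). Algorithm PDFPM: choose $x^0\in\mathbb{R}^n$, $\alpha,\epsilon\in(0,1)$, $\sigma_0\ge1$, symmetric positive semidefinite $B_j^0\in\mathbb{R}^{n\times n}$; set $k=0$. Step 1: choose $0<\lambda_k\le \epsilon/(\sigma_k\sqrt n)$ and compute $g_{f_j}(x^k,\lambda_k)$ for each $j$. Step 2: let $\bar{x}^k$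 be the (unique) minimizer of $\Phi_{x^k}(x)+\frac{\sigma_k}{2}\|x-x^k\|^2$, where $\Phi_{x^k}(x)=\max_{j\in\mathcal{J}}[\langle g_{f_j}(x^k,\lambda_k)+\frac12B_j^k(x-x^k),x-x^k\rangle+h_j(x)-h_j(x^k)]$. Step 3: if $\sigma_k\|\bar{x}^k-x^k\|\ge\epsilon$ go to Step 4; otherwise stop. Step 4: if $F_j(\bar{x}^k)\le F_j(x^k)-\frac{\alpha\epsilon^2}{2\sigma_k}$ for all $j\in\mathcal{J}$, set $x^{k+1}=\bar{x}^k$, $\sigma_{k+1}=\sigma_k$, choose symmetric positive semidefinite $B_j^{k+1}$, set $k\leftarrow k+1$ and go to Step 1; otherwise replace $\sigma_k$ by $2\sigma_k$ and go to Step 1 (same $k$). Assumption A1: there is $\overline{B}\ge0$ with $\|B_j^k\|\le\overline{B}$ for all iterations $k$ and all $j\in\mathcal{J}$. Assumption A2: for each $j$ there are $L_j,M_j>0$ and $\beta_j\in(0,1]$ with $f_j(y)\le f_j(x)+\langle\nabla f_j(x),y-x\rangle+\frac{L_j}{2}\|y-x\|^2+\frac{M_j}{\beta_j+1}\|y-x\|^{\beta_j+1}$ for all $x,y\in\mathbb{R}^n$. Assumption A3: with the same $L_j,M_j,\beta_j$, $\|\nabla f_j(x)-g_{f_j}(x,\lambda)\|\le\lambda\frac{\sqrt n L_j}{2}+\sqrt n\frac{M_j}{\beta_j+1}\lambda^{\beta_j}$ for all $x$ and all $\lambda\in(0,1]$. *)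

(* Defs.v *)
From HB Require Import structures.
From mathcomp Require Import all_boot all_order all_algebra.
From mathcomp Require Import all_classical all_reals all_analysis.
Set Implicit Arguments. Unset Strict Implicit. Unset Printing Implicit Defensive.
Import Order.TTheory GRing.Theory Num.Theory.
Import numFieldNormedType.Exports.
Local Open Scope classical_set_scope.
Local Open Scope ring_scope.

Section PDFPM.
Variable R : realType.

Definition dotv (n : nat) (u v : 'cV[R]_n) : R := \sum_(i < n) u i 0 * v i 0.

Definition enorm (n : nat) (u : 'cV[R]_n) : R := Num.sqrt (dotv u u).

Definition specnorm (n : nat) (B : 'M[R]_n) : R :=
  sup [set enorm (B *m v) | v in [set v : 'cV[R]_n | enorm v <= 1]].

Definition grad (n : nat) (f : 'cV[R]_n -> R) (x : 'cV[R]_n) : 'cV[R]_n :=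
  \col_(i < n) derive f x (delta_mx i 0 : 'cV[R]_n).

Definition sym_psd (n : nat) (B : 'M[R]_n) : Prop :=
  B^T = B /\ forall v : 'cV[R]_n, 0 <= dotv v (B *m v).

Definition convex_ext (n : nat) (h : 'cV[R]_n -> \bar R) : Prop :=
  (forall x, h x != -oo%E) /\
  forall (x y : 'cV[R]_n) (t : R), 0 <= t <= 1 ->
    (h (t *: x + (1 - t) *: y)%R <= t%:E * h x + (1 - t)%:E * h y)%E.

(* the model function Phi_{x^k} of Step 2, with g j = g_{f_j}(x^k, lambda_k) *)
Definition Phi (m n : nat) (g : 'I_m -> 'cV[R]_n) (B : 'I_m -> 'M[R]_n)
  (h : 'I_m -> 'cV[R]_n -> \bar R) (xk x : 'cV[R]_n) : \bar R :=
  (\big[maxe/-oo]_(j < m)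
     ((dotv (g j + 2^-1 *: (B j *m (x - xk)))%R (x - xk)%R)%:E + (h j x - h j xk)))%E.

End PDFPM.

(* Main.v *)
Require Import Defs.
From HB Require Import structures.
From mathcomp Require Import all_boot all_order all_algebra.
From mathcomp Require Import all_classical all_reals all_analysis.
Import Order.TTheory GRing.Theory Num.Theory.
Import numFieldNormedType.Exports.
Local Open Scope classical_set_scope.
Local Open Scope ring_scope.
From mathcomp Require Import lra.
Section H.
Variable R : realType.
Variable n : nat.
Implicit Types u v w : 'cV[R]_n.

Lemma dotvC u v : dotv u v = dotv v u.
Proof. by apply: eq_bigr => i _; rewrite mulrC. Qed.

Lemma dotvDl u v w : dotv (u + v) w = dotv u w + dotv v w.
Proof. by rewrite /dotv -big_split; apply: eq_bigr => i _; rewrite mxE mulrDl. Qed.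

Lemma dotvZl (c : R) u w : dotv (c *: u) w = c * dotv u w.
Proof. by rewrite /dotv mulr_sumr; apply: eq_bigr => i _; rewrite mxE mulrA. Qed.

Lemma dotvNl u w : dotv (- u) w = - dotv u w.
Proof. by rewrite -scaleN1r dotvZl mulN1r. Qed.

Lemma dotv_ge0 u : 0 <= dotv u u.
Proof. by apply: sumr_ge0 => i _; rewrite -expr2 sqr_ge0. Qed.

Lemma enorm_sq u : enorm u ^+ 2 = dotv u u.
Proof. by rewrite /enorm sqr_sqrtr // dotv_ge0. Qed.

Lemma enorm_ge0 u : 0 <= enorm u.
Proof. exact: sqrtr_ge0. Qed.

Lemma enorm0 : enorm (0 : 'cV[R]_n) = 0.
Proof. by rewrite /enorm /dotv big1 ?sqrtr0 // => i _; rewrite mxE mul0r. Qed.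

Lemma dotv0r u : dotv u 0 = 0.
Proof. by rewrite /dotv big1 // => i _; rewrite mxE mulr0. Qed.

Lemma cauchy_schwarz u v : 0 < enorm v -> dotv u v <= enorm u * enorm v.
Proof.
move=> vpos.
set c := dotv u v / enorm v ^+ 2.
have H : 0 <= dotv (u - c *: v) (u - c *: v) by apply: dotv_ge0.
rewrite dotvDl dotvNl dotvZl !(dotvC _ (u - c *: v)) !dotvDl !dotvNl !dotvZl in H.
rewrite -!enorm_sq (dotvC v u) in H.
have e2 : 0 < enorm v ^+ 2 by rewrite exprn_gt0.
have : dotv u v ^+ 2 <= (enorm u * enorm v) ^+ 2.
  have Hc : c * enorm v ^+ 2 = dotv u v by rewrite /c divfK // gt_eqF.
  rewrite exprMn.
  have : 0 <= enorm u ^+ 2 - c * dotv u v by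
    move: H; rewrite -Hc; nra.
  rewrite -Hc => H2.
  have : 0 <= enorm v ^+ 2 * (enorm u ^+ 2 - c * (c * enorm v ^+ 2)) by
    apply: mulr_ge0 => //; exact: ltW.
  nra.
move=> h; rewrite -ler_sqrt ?exprn_ge0 ?mulr_ge0 ?enorm_ge0 // in h.
  rewrite !sqrtr_sqr in h.
  by apply: le_trans (ler_norm _) _; rewrite (le_trans h) // ger0_norm ?mulr_ge0 ?enorm_ge0.
Qed.
End H.
Theorem lemma3 (R : realType) (m n : nat)
  (f : 'I_m -> 'cV[R]_n -> R) (h : 'I_m -> 'cV[R]_n -> \bar R)
  (gf : 'I_m -> 'cV[R]_n -> R -> 'cV[R]_n)
  (L M beta : 'I_m -> R) (Bbar alpha eps sigma lambda : R)
  (B : 'I_m -> 'M[R]_n) (xk xbar : 'cV[R]_n) :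
  (0 < m)%N -> (0 < n)%N ->
  (* standing setting *)
  (forall j x, differentiable (f j) x) ->
  (forall j, convex_ext (h j)) ->
  (forall j x, gf j x t @[t --> 0^'+] --> grad (f j) x) ->
  (* parameters of PDFPM at the current iteration *)
  0 < alpha < 1 -> 0 < eps < 1 -> 1 <= sigma ->
  0 < lambda <= eps / (sigma * Num.sqrt n%:R) ->
  (forall j, sym_psd (B j)) ->
  (forall j, h j xk \is a fin_num) ->
  (* Step 2: xbar minimizes Phi_{x^k}(x) + sigma/2 ||x - x^k||^2 *)
  (forall x, (Phi (fun j => gf j xk lambda) B h xk xbar
                + (sigma / 2 * enorm (xbar - xk) ^+ 2)%:E
              <= Phi (fun j => gf j xk lambda) B h xk x
                + (sigma / 2 * enorm (x - xk) ^+ 2)%:E)%E) ->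
  (* A1 *)
  0 <= Bbar -> (forall j, specnorm (B j) <= Bbar) ->
  (* A2 *)
  (forall j, 0 < L j /\ 0 < M j /\ 0 < beta j <= 1) ->
  (forall j x y, f j y <= f j x + dotv (grad (f j) x) (y - x)
        + L j / 2 * enorm (y - x) ^+ 2
        + M j / (beta j + 1) * enorm (y - x) `^ (beta j + 1)) ->
  (* A3 *)
  (forall j x lam, 0 < lam <= 1 ->
     enorm (grad (f j) x - gf j x lam)
       <= lam * (Num.sqrt n%:R * L j / 2)
          + Num.sqrt n%:R * (M j / (beta j + 1)) * lam `^ beta j) ->
  (* Step 3 test *)
  eps <= sigma * enorm (xbar - xk) ->
  forall j : 'I_m,
    ((f j xbar)%:E + h j xbar
     <= (f j xk)%:E + h j xk
        - ((sigma - 5 * L j - Bbar) / 2 * enorm (xbar - xk) ^+ 2)%:E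
        + ((4 `^ beta j * n%:R `^ ((1 - beta j) / 2) * M j + M j) / (beta j + 1)
             * enorm (xbar - xk) `^ (beta j + 1))%:E)%E.
Proof.
set s := xbar - xk. set d := enorm s.
move=> m0 n0 _ hconv _ _ /andP[e0 e1] s1 /andP[l0 lle] Bpsd hfin Hmin Bb0 _ LMb A2 A3 test j.
have sig0 : 0 < sigma by lra.
have d0 : 0 < d.
  rewrite lt_neqAle enorm_ge0 andbT; apply/eqP => dE.
  by move: test; rewrite -dE mulr0; lra.
have Pk : (Phi (fun j => gf j xk lambda) B h xk xk <= 0)%E.
  rewrite /Phi; apply: bigmax_le => // i _.
  by rewrite subrr dotv0r subee ?hfin // adde0.
have Pb := Hmin xk.
rewrite subrr enorm0 expr0n /= mulr0 adde0 in Pb.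
have Pb2 := le_trans Pb Pk.
have PhiB : (Phi (fun j => gf j xk lambda) B h xk xbar <= (- (sigma / 2 * d ^+ 2))%:E)%E.
  by rewrite -sube_le0 EFinN oppeK.
have Tj := le_trans (le_bigmax _ _ j) PhiB.
rewrite /= in Tj.
have [hk Ek] : exists hk, h j xk = hk%:E.
  by exists (fine (h j xk)); rewrite fineK ?hfin.
have [hb Eb] : exists hb, h j xbar = hb%:E.
  case E: (h j xbar) => [r| |]; first by exists r.
    by move: Tj; rewrite -/s E Ek.
  by have := (hconv j).1 xbar; rewrite E.
rewrite -/s Eb Ek in Tj *.
rewrite -?EFinB -?EFinD -?EFinB -?EFinD lee_fin in Tj.
rewrite -?EFinB -?EFinD -?EFinB -?EFinD -?EFinB -?EFinD lee_fin.
move: (LMb j) => [Lj [Mj /andP[b0 b1]]].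
set g := gf j xk lambda in Tj.
set G := grad (f j) xk.
have qE : dotv (g + 2^-1 *: (B j *m s)) s = dotv g s + 2^-1 * dotv (B j *m s) s.
  by rewrite dotvDl dotvZl.
have bq : 0 <= dotv (B j *m s) s by rewrite dotvC; exact: (Bpsd j).2.
have HA2 := A2 j xk xbar; rewrite -/s -/d -/G in HA2.
have dG : dotv G s = dotv g s + dotv (G - g) s.
  by rewrite -dotvDl addrC subrK.
have CS : dotv (G - g) s <= enorm (G - g) * d by apply: cauchy_schwarz.
set sn := Num.sqrt n%:R in lle A3.
have sn1 : 1 <= sn by rewrite -sqrtr1 ler_sqrt // ler1n.
have ls : lambda * sn <= d.
  rewrite ler_pdivlMr ?mulr_gt0 // ?(lt_le_trans ltr01 sn1) // in lle.
  rewrite -(ler_pM2l sig0); nra.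
have l1 : lambda <= 1.
  have : lambda * sn <= 1.
    rewrite ler_pdivlMr ?mulr_gt0 // ?(lt_le_trans ltr01 sn1) // in lle.
    nra.
  nra.
have HA3 := A3 j xk lambda; rewrite l0 l1 -/G -/g in HA3; have {}HA3 := HA3 isT.
set bj := beta j in HA2 HA3 b0 b1 *.
set P := n%:R `^ ((1 - bj) / 2).
have sn0 : 0 <= sn by exact: sqrtr_ge0.
have hP : sn `^ (1 - bj) = P.
  by rewrite /sn -powR12_sqrt // -powRrM mulrC.
have hpow1 : sn * lambda `^ bj <= P * d `^ bj.
  have -> : sn = sn `^ (1 - bj) * sn `^ bj.
    rewrite -powRD ?subrK ?powRr1 //; apply/implyP => _.
    by rewrite gt_eqF // (lt_le_trans ltr01 sn1).
  rewrite hP -mulrA -powRM ?(ltW l0) //.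
  apply: ler_wpM2l; first exact: powR_ge0.
  apply: ge0_ler_powR; rewrite ?nnegrE ?(ltW b0) ?mulr_ge0 ?(ltW l0) ?enorm_ge0 //.
  by rewrite mulrC.
have hD : d `^ (bj + 1) = d `^ bj * d.
  by rewrite powRD ?powRr1 ?enorm_ge0 //; apply/implyP => _; rewrite gt_eqF.
have h4 : 1 <= 4 `^ bj.
  have h14 : (1 : R) <= 4 by rewrite ler1n.
  by have := @ler_powR R 4 h14 0 bj (ltW b0); rewrite powRr0.
set K := M j / (bj + 1) in HA2 HA3 *.
have K0 : 0 < K by rewrite /K divr_gt0 //; lra.
set e := enorm (G - g) in CS.
set lb := lambda `^ bj in HA3 hpow1.
set db := d `^ bj in hpow1 hD.
have P0 : 0 <= P by exact: powR_ge0.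
have db0 : 0 <= db by exact: powR_ge0.
have eE1 : e * d <= (lambda * (sn * L j / 2) + sn * K * lb) * d.
  by apply: ler_wpM2r => //; exact: ltW.
have eE2 : lambda * (sn * L j / 2) * d <= L j / 2 * d ^+ 2.
  have : 0 <= (d - lambda * sn) * (L j / 2 * d).
    by apply: mulr_ge0; [lra | apply: mulr_ge0; [lra | exact: ltW]].
  nra.
have eE3 : sn * K * lb * d <= K * P * db * d.
  have : 0 <= (P * db - sn * lb) * (K * d).
    by apply: mulr_ge0; [lra | apply: mulr_ge0; exact: ltW].
  nra.
have h5 : K * P * db * d <= 4 `^ bj * P * K * (db * d).
  have : 0 <= (4 `^ bj - 1) * (K * P * db * d).
    apply: mulr_ge0; first lra. apply: mulr_ge0; last exact: ltW. apply: mulr_ge0 => //. apply: mulr_ge0 => //. exact: ltW.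
  nra.
have -> : (4 `^ bj * P * M j + M j) / (bj + 1) = 4 `^ bj * P * K + K.
  by rewrite /K mulrDl !mulrA.
rewrite hD -/s in HA2 *.
rewrite qE in Tj.
have Ld : 0 <= L j * d ^+ 2 by rewrite mulr_ge0 ?sqr_ge0 // ltW.
have Bd : 0 <= Bbar * d ^+ 2 by rewrite mulr_ge0 // sqr_ge0.
rewrite dG in HA2.
nra.
Qed.
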